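(* For any $\epsilon>0$ and $N$ sufficiently large, there exists $\delta\in(0,\epsilon)$ such that for all $\bm\sigma\in S_N^n$ and $\bm\omega\in(\mathbb{R}^M)^n$ for which $\Psi(\bm\sigma,\bm\omega)$ is defined, $$\mathbf 1_{Q^\epsilon_{M+N}}\big(\Psi(\bm\sigma,\bm\omega)\big)\ge\mathbf 1_{Q^\epsilon_N}(\bm\sigma)\,\mathbf 1_{\Omega^{\epsilon/2,\delta}_M}(\bm\omega).$$
   Context: $n\ge1$, $M\ge1$ fixed. $S_K$ = sphere of radius $\sqrt K$ in $\mathbb{R}^K$. Overlap of $\bm\sigma,\bm\sigma'\in(\mathbb{R}^K)^n$: $\bm R(\bm\sigma,\bm\sigma')=(\frac1K\sum_{i\le K}\sigma_i(j)\sigma'_i(j'))_{j,j'\le n}$. $\bm Q$ is a symmetric positive semidefinite $n\times n$ matrix with unit diagonal; $Q^\epsilon_K=\{\bm\sigma\in S_K^n:\|\bm R(\bm\sigma,\bm\sigma)-\bm Q\|_\infty\le\epsilon\}$ (max-entry norm). For $\bm\omega(j)\in\mathbb{R}^M$ write $\bm\omega(j)=s_j\bm\tau(j)$ with $s_j=\|\bm\omega(j)\|/\sqrt M$ and $\bm\tau(j)\in S_M$; $\Omega^{\epsilon/2,\delta}_M=\{(s_j\bm\tau(j))_{j\le n}:\bm\tau\in Q^{\epsilon/2}_M,\ s_j\in[\sqrt{1-\delta},\sqrt{1+\delta}]\ \forall j\}$. For $\bm x\in\mathbb{R}^M$, $a_1(\bm x)=1$ and $a_\ell(\bm x)=\prod_{j=1}^{\ell-1}\sqrt{1+\frac{1-x_j^2}{M+N-j}}$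 for $1<\ell\le M+1$. For $\bm\sigma\in S_N$, $\bm\omega\in\mathbb{R}^M$, $\psi(\bm\sigma,\bm\omega)=(\sigma_1a_{M+1}(\bm\omega),\dots,\sigma_Na_{M+1}(\bm\omega),\omega_1a_1(\bm\omega),\dots,\omega_Ma_M(\bm\omega))$, and $\Psi(\bm\sigma,\bm\omega)=(\psi(\bm\sigma(j),\bm\omega(j)))_{j\le n}$ for $\bm\sigma\in S_N^n$, $\bm\omega\in(\mathbb{R}^M)^n$. *)

(* Defs.v *)
From HB Require Import structures.
From mathcomp Require Import all_boot all_order all_algebra.
From mathcomp Require Import reals.
Set Implicit Arguments. Unset Strict Implicit. Unset Printing Implicit Defensive.
Import Order.TTheory GRing.Theory Num.Theory.
Local Open Scope ring_scope.

Section Defs.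
Variable R : realType.

(* A configuration (σ(1),...,σ(n)) ∈ (R^K)^n is an n×K matrix whose j-th row is σ(j). *)

Definition on_sphere (K : nat) (x : 'rV[R]_K) : Prop :=
  \sum_(i < K) (x 0 i) ^+ 2 = K%:R.

Definition overlap (n K : nat) (s s' : 'M[R]_(n, K)) : 'M[R]_n :=
  (K%:R)^-1 *: (s *m s'^T).

(* Q^eps_K = { σ ∈ S_K^n : || R(σ,σ) - Q ||_∞ <= eps } (max-entry norm). *)
Definition Qset (n K : nat) (eps : R) (Q : 'M[R]_n) (s : 'M[R]_(n, K)) : Prop :=
  (forall j, on_sphere (row j s)) /\
  (forall j j', `|overlap s s j j' - Q j j'| <= eps).

Definition Omega_set (n M : nat) (eps delta : R) (Q : 'M[R]_n) (w : 'M[R]_(n, M)) : Prop :=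
  exists (tau : 'M[R]_(n, M)) (s : 'I_n -> R),
    Qset (eps / 2) Q tau /\
    (forall j, Num.sqrt (1 - delta) <= s j <= Num.sqrt (1 + delta)) /\
    (forall j i, w j i = s j * tau j i).

(* The j-th factor (j = i+1, 1-based) inside a_l: 1 + (1 - x_j^2)/(M+N-j). *)
Definition a_arg (M N : nat) (x : 'rV[R]_M) (i : 'I_M) : R :=
  1 + (1 - (x 0 i) ^+ 2) / ((M + N)%:R - (i.+1)%:R).

Definition a_coef (M N : nat) (l : nat) (x : 'rV[R]_M) : R :=
  \prod_(i < M | (i.+1 < l)%N) Num.sqrt (a_arg N x i).

Definition psi (N M : nat) (s : 'rV[R]_N) (w : 'rV[R]_M) : 'rV[R]_(N + M) :=
  row_mx (a_coef N M.+1 w *: s) (\row_(i < M) (w 0 i * a_coef N i.+1 w)).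

Definition Psi (n N M : nat) (s : 'M[R]_(n, N)) (w : 'M[R]_(n, M)) : 'M[R]_(n, N + M) :=
  \matrix_(j < n, k < N + M) psi (row j s) (row j w) 0 k.

(* Ψ(σ,ω) is defined: every square-root argument occurring in a_1..a_{M+1}(ω(j)) is >= 0. *)
Definition Psi_defined (n N M : nat) (w : 'M[R]_(n, M)) : Prop :=
  forall (j : 'I_n) (i : 'I_M), 0 <= a_arg N (row j w) i.

Definition psd (n : nat) (Q : 'M[R]_n) : Prop :=
  forall v : 'rV[R]_n, 0 <= (v *m Q *m v^T) 0 0.

End Defs.

(* Main.v *)
Require Import Defs.
From HB Require Import structures.
From mathcomp Require Import all_boot all_order all_algebra.
From mathcomp Require Import reals.
From mathcomp Require Import ring lra zify.
Import Order.TTheory GRing.Theory Num.Theory.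
Local Open Scope ring_scope.

Section Rows.
Variable R : realType.
Variables M N : nat.
Hypothesis N1 : (1 <= N)%N.

Definition bk (x : 'rV[R]_M) (k : nat) : R :=
  \prod_(i < M | (i < k)%N) a_arg N x i.
Definition sk (x : 'rV[R]_M) (k : nat) : R :=
  \sum_(i < M | (i < k)%N) (x 0 i) ^+ 2 * bk x i.

Lemma bk_step x k (hk : (k < M)%N) :
  bk x k.+1 = bk x k * a_arg N x (Ordinal hk).
Proof.
rewrite /bk (bigD1 (Ordinal hk)) //= mulrC; congr (_ * _).
apply: eq_bigl => i; rewrite -val_eqE /= ltnS.
by case: ltngtP.
Qed.

Lemma sk_step x k (hk : (k < M)%N) :
  sk x k.+1 = sk x k + (x 0 (Ordinal hk)) ^+ 2 * bk x k.
Proof.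
rewrite /sk (bigD1 (Ordinal hk)) //= addrC; congr (_ + _).
apply: eq_bigl => i; rewrite -val_eqE /= ltnS.
by case: ltngtP.
Qed.

Lemma den_ge (i : 'I_M) : N%:R <= ((M + N)%:R - (i.+1)%:R :> R).
Proof.
have h : (i.+1 <= M + N)%N by have := ltn_ord i; lia.
rewrite -natrB // ler_nat; have := ltn_ord i; lia.
Qed.

Lemma identity x : forall k, (k <= M)%N ->
  sk x k + ((M + N)%:R - k%:R) * bk x k = (M + N)%:R.
Proof.
elim=> [|k IH] hk.
  by rewrite /sk /bk !big1 // subr0 mulr1 add0r.
have hk' : (k < M)%N by [].
rewrite sk_step bk_step /a_arg /=.
have hD := den_ge (Ordinal hk'); rewrite /= in hD.
have hN : 0 < N%:R :> R by rewrite ltr0n.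
set D := (_ - _ : R) in hD *.
have hD0 : D != 0 by apply/negP => /eqP h; rewrite h in hD; lra.
rewrite -[RHS](IH (ltnW hk)).
rewrite /D -!natr1 in hD0 *.
field; by rewrite -natrD.
Qed.

Lemma bk_bound x t : 0 <= t <= 1 -> (forall i, `|a_arg N x i - 1| <= t) ->
  forall k, (k <= M)%N -> `|bk x k - 1| <= k%:R * t * 2 ^+ k.
Proof.
move=> /andP[t0 t1] ht; elim=> [|k IH] hk.
  by rewrite /bk big1 // subrr normr0 mul0r mul0r.
have hk' : (k < M)%N by [].
rewrite bk_step.
set a := a_arg N x _.
have ha := ht (Ordinal hk'); rewrite -/a in ha.
have e : bk x k * a - 1 = (bk x k - 1) * a + (a - 1) by ring.
rewrite e; apply: le_trans (ler_normD _ _) _.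
rewrite normrM.
have IH' := IH (ltnW hk).
have ha2 : `|a| <= 2.
  have -> : a = (a - 1) + 1 by ring.
  apply: le_trans (ler_normD _ _) _; rewrite normr1; lra.
have p0 : 0 <= 2 ^+ k :> R by apply: exprn_ge0.
have h1 : `|bk x k - 1| * `|a| <= k%:R * t * 2 ^+ k * 2.
  by apply: ler_pM => //.
have h2 : t <= t * 2 ^+ k.+1.
  rewrite -[X in X <= _]mulr1; apply: ler_wpM2l => //.
  by apply: exprn_ege1; lra.  
rewrite exprS -natr1.
have : k%:R * t * 2 ^+ k * 2 + t <= (k%:R + 1) * t * (2 * 2 ^+ k).
  rewrite exprS in h2. have kk : 0 <= k%:R :> R by apply: ler0n.
  nra.
lra.
Qed.

Lemma acoef_ge0 l (x : 'rV[R]_M) : 0 <= a_coef N l x.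
Proof. by apply: prodr_ge0 => i _; apply: sqrtr_ge0. Qed.

Lemma acoef_sqr (x : 'rV[R]_M) k : (forall i, 0 <= a_arg N x i) ->
  a_coef N k.+1 x ^+ 2 = bk x k.
Proof.
move=> hx; rewrite /a_coef -prodrXl; apply: eq_bigr => i _.
exact: sqr_sqrtr.
Qed.


Lemma s_facts (s d : R) : 0 <= d <= 1 ->
  Num.sqrt (1 - d) <= s <= Num.sqrt (1 + d) ->
  [/\ 0 <= s, 1 - d <= s ^+ 2 & s ^+ 2 <= 1 + d].
Proof.
move=> /andP[d0 d1] /andP[h1 h2].
have s0 : 0 <= s by apply: le_trans h1; apply: sqrtr_ge0.
split => //.
  have e : 1 - d = Num.sqrt (1 - d) ^+ 2 by rewrite sqr_sqrtr //; lra.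
  by rewrite {1}e ler_sqr // ?nnegrE ?sqrtr_ge0.
have e : 1 + d = Num.sqrt (1 + d) ^+ 2 by rewrite sqr_sqrtr //; lra.
by rewrite e ler_sqr // ?nnegrE ?sqrtr_ge0.
Qed.

Lemma single_le (tau : 'rV[R]_M) (i : 'I_M) :
  tau 0 i ^+ 2 <= \sum_(l < M) tau 0 l ^+ 2.
Proof.
rewrite (bigD1 i) //= lerDl; apply: sumr_ge0 => l _; apply: sqr_ge0.
Qed.

Definition econst : R := M%:R * 2 ^+ M * (2 * M + 1)%:R / N%:R.

Lemma row_boundsX : True. Proof. by []. Qed.
Lemma row_bounds (x tau : 'rV[R]_M) (s d : R) :
  (1 <= M)%N ->
  0 <= d <= 1 ->
  Num.sqrt (1 - d) <= s <= Num.sqrt (1 + d) ->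
  (forall i, x 0 i = s * tau 0 i) ->
  \sum_(i < M) tau 0 i ^+ 2 = M%:R ->
  (forall i, 0 <= a_arg N x i) ->
  econst <= 1 ->
  (forall k, (k <= M)%N -> `|bk x k - 1| <= econst) /\
  N%:R * `|bk x M - 1| <= M%:R * d + 2 * M%:R * econst.
Proof.
move=> M1 hd hs hx htau hdef he.
have [s0 sl su] := s_facts _ _ hd hs.
have hN : 0 < N%:R :> R by rewrite ltr0n.
have hM : 1 <= M%:R :> R by rewrite ler1n.
have p2 : 1 <= 2 ^+ M :> R by apply: exprn_ege1; lra.
set t : R := (2 * M + 1)%:R / N%:R.
have t0 : 0 <= t by apply: divr_ge0; [apply: ler0n | apply: ltW].
have te : t <= econst.
  rewrite /econst /t -!mulrA; rewrite -[X in X <= _]mul1r.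
  apply: ler_pM => //.
  by rewrite -[X in X <= _]mul1r ler_wpM2r // -/t.
have hx2 i : x 0 i ^+ 2 <= 2 * M%:R.
  rewrite hx exprMn; have := single_le tau i; rewrite htau => hti.
  have : 0 <= tau 0 i ^+ 2 by apply: sqr_ge0.
  have : 0 <= s ^+ 2 by apply: sqr_ge0.
  case/andP: hd => d0 d1.
  nra.
have harg i : `|a_arg N x i - 1| <= t.
  rewrite /a_arg addrC addKr normrM normfV.
  have hD := den_ge i.
  set D := (_ - _ : R) in hD *.
  rewrite [`|D|]ger0_norm; last lra.
  have h1 : `|1 - x 0 i ^+ 2| <= (2 * M + 1)%:R.
    apply: le_trans (ler_normB _ _) _; rewrite normr1 ger0_norm ?sqr_ge0 //.
    rewrite natrD natrM; have := hx2 i; lra.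
  rewrite /t ler_pdivrMr; last lra.
  by apply: le_trans h1 _; rewrite mulrAC ler_pdivlMr // ler_wpM2l // ler0n.
have e0 : 0 <= econst by apply: le_trans te.
have eE : econst = M%:R * t * 2 ^+ M by rewrite /econst /t; ring.
have hb k : (k <= M)%N -> `|bk x k - 1| <= econst.
  move=> hk.
  have ht1 : 0 <= t <= 1 by apply/andP; split => //; apply: le_trans he.
  apply: le_trans (bk_bound x t ht1 harg k hk) _.
  rewrite eE; apply: ler_pM.
  - by apply: mulr_ge0 => //; apply: ler0n.
  - by apply: exprn_ge0.
  - by apply: ler_wpM2r => //; rewrite ler_nat.
  - by apply: ler_weXn2l => //; lra.
split => //.
have hid := identity x M (leqnn M).
have hsk : sk x M = \sum_(i < M) x 0 i ^+ 2 * bk x i.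
  by apply: eq_bigl => i; rewrite ltn_ord.
have hx2s : \sum_(i < M) x 0 i ^+ 2 = s ^+ 2 * M%:R.
  rewrite -htau mulr_sumr; apply: eq_bigr => i _; by rewrite hx exprMn.
have hS : `|\sum_(i < M) x 0 i ^+ 2 * (1 - bk x i)| <= s ^+ 2 * M%:R * econst.
  apply: le_trans (ler_norm_sum _ _ _) _.
  rewrite -hx2s mulr_suml; apply: ler_sum => i _.
  rewrite normrM ger0_norm ?sqr_ge0 // distrC.
  by apply: ler_wpM2l; [apply: sqr_ge0 | apply: hb; apply: ltnW].
have eq1 : N%:R * (bk x M - 1) = M%:R * (1 - s ^+ 2) + \sum_(i < M) x 0 i ^+ 2 * (1 - bk x i).
  have -> : \sum_(i < M) x 0 i ^+ 2 * (1 - bk x i) = s ^+ 2 * M%:R - sk x M.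
    rewrite hsk -hx2s -sumrB; apply: eq_bigr => i _; ring.
  rewrite natrD in hid; lra.
have hN0 : 0 <= N%:R :> R by apply: ltW.
rewrite -[N%:R]ger0_norm // -normrM eq1.
apply: le_trans (ler_normD _ _) _.
have h1s : `|1 - s ^+ 2| <= d by rewrite ler_norml; apply/andP; split; lra.
have hM0 : 0 <= M%:R :> R by apply: ler0n.
rewrite normrM [`|M%:R|]ger0_norm //.
have : M%:R * `|1 - s ^+ 2| <= M%:R * d by apply: ler_wpM2l.
have : s ^+ 2 * M%:R * econst <= 2 * M%:R * econst.
  apply: ler_wpM2r => //; apply: ler_wpM2r => //; case/andP: hd => _ ?; lra.
lra.
Qed.
End Rows.

Section Arith.
Variable R : realType.

Lemma sqrt_close (z : R) : 0 <= z -> `|z - 1| <= `|z ^+ 2 - 1|.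
Proof.
move=> z0; have -> : z ^+ 2 - 1 = (z - 1) * (z + 1) by ring.
rewrite normrM -[X in X <= _]mulr1 ler_wpM2l //.
rewrite ger0_norm; lra.
Qed.

Lemma prod_close (b b' : R) :
  `|b * b' - 1| <= `|b - 1| + `|b' - 1| + `|b - 1| * `|b' - 1|.
Proof.
have -> : b * b' - 1 = (b - 1) + (b' - 1) + (b - 1) * (b' - 1) by ring.
rewrite -normrM; apply: le_trans (ler_normD _ _) _.
by rewrite lerD2r; apply: ler_normD.
Qed.

Lemma absmul_le (a b : R) : `|a * b| <= (a ^+ 2 + b ^+ 2) / 2.
Proof.
rewrite normrM ler_pdivlMr; last lra.
have : 0 <= (`|a| - `|b|) ^+ 2 by apply: sqr_ge0.
have ea : a ^+ 2 = `|a| ^+ 2 by rewrite -normrX ger0_norm ?sqr_ge0.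
have eb : b ^+ 2 = `|b| ^+ 2 by rewrite -normrX ger0_norm ?sqr_ge0.
rewrite ea eb.
have ha := normr_ge0 a; have hb := normr_ge0 b.
nra.
Qed.

Lemma absdot K (u v : 'rV[R]_K) :
  \sum_(i < K) u 0 i ^+ 2 = K%:R -> \sum_(i < K) v 0 i ^+ 2 = K%:R ->
  \sum_(i < K) `|u 0 i * v 0 i| <= K%:R.
Proof.
move=> hu hv.
apply: le_trans (_ : \sum_(i < K) (u 0 i ^+ 2 + v 0 i ^+ 2) / 2 <= _).
  by apply: ler_sum => i _; apply: absmul_le.
rewrite -mulr_suml big_split /= hu hv; lra.
Qed.

Lemma final_arith (N' M' Q eps P T W AA SS d e : R) :
  0 < N' -> 0 <= M' ->
  `|P - N' * Q| <= N' * eps -> `|P| <= N' ->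
  `|T - M' * Q| <= M' * (eps / 2) -> `|T| <= M' ->
  `|SS - 1| <= d -> `|W - SS * T| <= 6 * M' * e ->
  N' * `|AA - 1| <= 3 * (M' * d + 2 * M' * e) ->
  4 * M' * d + 12 * M' * e <= M' * eps / 2 ->
  `|AA * P + W - (N' + M') * Q| <= (N' + M') * eps.
Proof.
move=> hN hM h1 h2 h3 h4 h5 h6 h7 h8.
have -> : AA * P + W - (N' + M') * Q =
  (P - N' * Q) + (AA - 1) * P + ((SS - 1) * T + (T - M' * Q)) + (W - SS * T) by ring.
have hX2 : `|(AA - 1) * P| <= N' * `|AA - 1|.
  by rewrite normrM mulrC ler_wpM2r.
have hX3 : `|(SS - 1) * T| <= d * M'.
  by rewrite normrM; apply: ler_pM.
have t1 := ler_normD (P - N' * Q + (AA - 1) * P + ((SS - 1) * T + (T - M' * Q))) (W - SS * T).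
have t2 := ler_normD (P - N' * Q + (AA - 1) * P) ((SS - 1) * T + (T - M' * Q)).
have t3 := ler_normD (P - N' * Q) ((AA - 1) * P).
have t4 := ler_normD ((SS - 1) * T) (T - M' * Q).
lra.
Qed.

End Arith.

Section PsiLemmas.
Variable R : realType.
Variables n N M : nat.
Variables (s : 'M[R]_(n, N)) (w : 'M[R]_(n, M)).

Lemma Psi_l j i : Psi s w j (lshift M i) = a_coef N M.+1 (row j w) * s j i.
Proof. by rewrite /Psi mxE /psi row_mxEl !mxE. Qed.

Lemma Psi_r j l : Psi s w j (rshift N l) = w j l * a_coef N l.+1 (row j w).
Proof. by rewrite /Psi mxE /psi row_mxEr !mxE. Qed.

Lemma Psi_dot j j' :
  \sum_(k < N + M) Psi s w j k * Psi s w j' k =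
  a_coef N M.+1 (row j w) * a_coef N M.+1 (row j' w) * \sum_(i < N) s j i * s j' i
  + \sum_(l < M) (w j l * a_coef N l.+1 (row j w)) * (w j' l * a_coef N l.+1 (row j' w)).
Proof.
rewrite big_split_ord /=; congr (_ + _).
  by rewrite mulr_sumr; apply: eq_bigr => i _; rewrite !Psi_l; ring.
by apply: eq_bigr => l _; rewrite !Psi_r.
Qed.

End PsiLemmas.

Lemma overlapE (R : realType) n K (X : 'M[R]_(n, K)) j j' :
  overlap X X j j' = K%:R^-1 * \sum_(k < K) X j k * X j' k.
Proof.
rewrite /overlap !mxE; congr (_ * _); apply: eq_bigr => k _; by rewrite !mxE.
Qed.

Lemma sphereE (R : realType) n K (X : 'M[R]_(n, K)) j :
  on_sphere (row j X) <-> \sum_(k < K) X j k * X j k = K%:R.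
Proof.
rewrite /on_sphere; have -> : \sum_(k < K) row j X 0 k ^+ 2 = \sum_(k < K) X j k * X j k.
  by apply: eq_bigr => k _; rewrite mxE expr2.
by [].
Qed.

Lemma scale_abs (R : realType) (K X Q b : R) : 0 < K ->
  `|K^-1 * X - Q| <= b -> `|X - K * Q| <= K * b.
Proof.
move=> hK h.
have -> : X - K * Q = K * (K^-1 * X - Q) by field; lra.
by rewrite normrM gtr0_norm // ler_wpM2l //; exact: ltW.
Qed.

Lemma scale_abs2 (R : realType) (K X Q b : R) : 0 < K ->
  `|X - K * Q| <= K * b -> `|K^-1 * X - Q| <= b.
Proof.
move=> hK h.
have -> : K^-1 * X - Q = K^-1 * (X - K * Q) by field; lra.
rewrite normrM gtr0_norm ?invr_gt0 //.
apply: le_trans (_ : K^-1 * (K * b) <= _).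
  by apply: ler_wpM2l => //; rewrite invr_ge0; exact: ltW.
by rewrite mulKf //; lra.
Qed.

Lemma absdotM (R : realType) n K (X : 'M[R]_(n, K)) j j' :
  on_sphere (row j X) -> on_sphere (row j' X) ->
  \sum_(i < K) `|X j i * X j' i| <= K%:R.
Proof.
move=> h1 h2; have := @absdot R K (row j X) (row j' X) h1 h2.
have -> : \sum_(i < K) `|row j X 0 i * row j' X 0 i| = \sum_(i < K) `|X j i * X j' i|.
  by apply: eq_bigr => i _; rewrite !mxE.
by [].
Qed.

Theorem lemma10 (R : realType) (n M : nat) (Q : 'M[R]_n) :
  (1 <= n)%N -> (1 <= M)%N ->
  Q^T = Q -> psd Q -> (forall j, Q j j = 1) ->
  forall eps : R, 0 < eps ->
  exists N0 : nat, forall N : nat, (N0 <= N)%N ->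
  exists delta : R, 0 < delta < eps /\
    forall (s : 'M[R]_(n, N)) (w : 'M[R]_(n, M)),
      Psi_defined N w ->
      Qset eps Q s ->
      Omega_set eps delta Q w ->
      Qset eps Q (Psi s w).
Proof.
move=> n1 M1 _ _ _ eps eps0.
set C : R := M%:R * 2 ^+ M * (2 * M + 1)%:R.
have C0 : 0 <= C.
  by rewrite /C; apply: mulr_ge0; [apply: mulr_ge0; [apply: ler0n | apply: exprn_ge0] | apply: ler0n].
have x0 : 0 <= C + 48 * C / eps.
  apply: addr_ge0 => //; apply: divr_ge0; [lra | exact: ltW].
exists (Num.Def.archi_bound (C + 48 * C / eps)) => N hN.
have hNr : C + 48 * C / eps < N%:R.
  by apply: lt_le_trans (archi_boundP x0) _; rewrite ler_nat.
have hN0 : 0 < N%:R :> R.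
  have : 0 <= 48 * C / eps by apply: divr_ge0; [lra | exact: ltW].
  lra.
have N1 : (0 < N)%N by rewrite -(ltr0n R).
have eE : econst R M N = C / N%:R by [].
have he1 : econst R M N <= 1.
  rewrite eE ler_pdivrMr // mul1r; have : 0 <= 48 * C / eps by apply: divr_ge0; [lra | exact: ltW].
  lra.
have he2 : 48 * econst R M N <= eps.
  rewrite eE mulrA ler_pdivrMr //.
  have : 48 * C / eps < N%:R by have : 0 <= C by []; lra.
  rewrite ltr_pdivrMr // => h; lra.
have he0 : 0 <= econst R M N by rewrite eE; apply: divr_ge0 => //; exact: ltW.
set e := econst R M N in he1 he2 he0 eE *.
set d := eps / (16 * (1 + eps)).
have hd16 : d * (16 * (1 + eps)) = eps by rewrite /d; field; lra.
have d0 : 0 < d by rewrite /d; apply: divr_gt0 => //; lra.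
have de : 16 * d <= eps.
  have : 0 <= d * eps by apply: mulr_ge0; exact: ltW.
  lra.
have d1 : d <= 1.
  have : 0 <= d * eps by apply: mulr_ge0; exact: ltW.
  have h1 : (1 - 16 * d) * (1 + eps) = 1 + eps - d * (16 * (1 + eps)) by ring.
  rewrite hd16 in h1.
  nra.
exists d; split; first by apply/andP; split => //; lra.
move=> s w hdef [hsS hsQ] [tau [sv [[htS htQ] [hsv hw]]]].
have hd : 0 <= d <= 1 by apply/andP; split => //; exact: ltW.
have hdefj j : forall i, 0 <= a_arg N (row j w) i by move=> i; apply: hdef.
have rowf j : (forall k, (k <= M)%N -> `|bk R M N (row j w) k - 1| <= e) /\
   N%:R * `|bk R M N (row j w) M - 1| <= M%:R * d + 2 * M%:R * e.
  have hx : forall i, row j w 0 i = sv j * row j tau 0 i by move=> i; rewrite !mxE hw.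
  exact: (@row_bounds R M N N1 (row j w) (row j tau) (sv j) d M1 hd (hsv j) hx (htS j) (hdefj j) he1).
split.
- move=> j; apply/sphereE; rewrite Psi_dot.
  have hid := @identity R M N N1 (row j w) M (leqnn M).
  have -> : \sum_(l < M) (w j l * a_coef N l.+1 (row j w)) * (w j l * a_coef N l.+1 (row j w))
          = sk R M N (row j w) M.
    rewrite /sk; apply: eq_big => [l|l _]; first by rewrite ltn_ord.
    by rewrite -acoef_sqr // mxE; ring.
  have -> : a_coef N M.+1 (row j w) * a_coef N M.+1 (row j w) = bk R M N (row j w) M.
    by rewrite -expr2 acoef_sqr.
  have := hsS j; move/sphereE => ->.
  rewrite natrD in hid; rewrite natrD; lra.
- move=> j j'.
  rewrite overlapE Psi_dot.
  have hNM : 0 < (N + M)%:R :> R by rewrite ltr0n addn_gt0 N1.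
  apply: scale_abs2 => //.
  rewrite natrD.
  have hM0 : 0 <= M%:R :> R by apply: ler0n.
  set A := a_coef N M.+1 (row j w).
  set A' := a_coef N M.+1 (row j' w).
  set P := \sum_(i < N) s j i * s j' i.
  set W := \sum_(l < M) _.
  set T := \sum_(l < M) tau j l * tau j' l.
  have hP1 : `|P - N%:R * Q j j'| <= N%:R * eps.
    by apply: scale_abs => //; have := hsQ j j'; rewrite overlapE.
  have hP2 : `|P| <= N%:R.
    apply: le_trans (ler_norm_sum _ _ _) _; exact: absdotM.
  have hT1 : `|T - M%:R * Q j j'| <= M%:R * (eps / 2).
    have hM0' : 0 < M%:R :> R by rewrite ltr0n.
    by apply: scale_abs => //; have := htQ j j'; rewrite overlapE.
  have hTa : \sum_(l < M) `|tau j l * tau j' l| <= M%:R by exact: absdotM.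
  have hT2 : `|T| <= M%:R by apply: le_trans (ler_norm_sum _ _ _) _.
  have [sj0 _ _] := s_facts R _ _ hd (hsv j).
  have [sj'0 _ _] := s_facts R _ _ hd (hsv j').
  have hSS : `|sv j * sv j' - 1| <= d.
    case/andP: (hsv j) => l1 u1; case/andP: (hsv j') => l2 u2.
    have sq0 : 0 <= Num.sqrt (1 - d) by apply: sqrtr_ge0.
    have hl : 1 - d <= sv j * sv j'.
      have <- : Num.sqrt (1 - d) * Num.sqrt (1 - d) = 1 - d by rewrite -expr2 sqr_sqrtr //; lra.
      by apply: ler_pM.
    have hu : sv j * sv j' <= 1 + d.
      have <- : Num.sqrt (1 + d) * Num.sqrt (1 + d) = 1 + d by rewrite -expr2 sqr_sqrtr //; lra.
      by apply: ler_pM.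
    rewrite ler_norml; apply/andP; split; lra.
  have hS2 : `|sv j * sv j'| <= 2.
    rewrite ger0_norm ?mulr_ge0 //; move: hSS; rewrite ler_norml => /andP[_ ?]; lra.
  have hal : forall l : 'I_M,
      `|a_coef N l.+1 (row j w) * a_coef N l.+1 (row j' w) - 1| <= 3 * e.
    move=> l.
    apply: le_trans (@sqrt_close R _ (mulr_ge0 (@acoef_ge0 R M N _ _) (@acoef_ge0 R M N _ _))) _.
    rewrite exprMn !acoef_sqr //.
    apply: le_trans (@prod_close R _ _) _.
    have h1 := (rowf j).1 l (ltnW (ltn_ord l)).
    have h2 := (rowf j').1 l (ltnW (ltn_ord l)).
    have h3 := ler_pM (normr_ge0 _) (normr_ge0 _) h1 h2.
    have : e * e <= e * 1 by apply: ler_wpM2l.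
    lra.
  have hW : `|W - sv j * sv j' * T| <= 6 * M%:R * e.
    have -> : W - sv j * sv j' * T = \sum_(l < M) (sv j * sv j') * (tau j l * tau j' l) *
        (a_coef N l.+1 (row j w) * a_coef N l.+1 (row j' w) - 1).
      rewrite /W /T mulr_sumr -sumrB; apply: eq_bigr => l _; rewrite !hw; ring.
    apply: le_trans (ler_norm_sum _ _ _) _.
    apply: le_trans (_ : \sum_(l < M) (6 * e) * `|tau j l * tau j' l| <= _).
      apply: ler_sum => l _; rewrite normrM (normrM (sv j * sv j')).
      have -> : 6 * e * `|tau j l * tau j' l| = (2 * `|tau j l * tau j' l|) * (3 * e) by ring.
      apply: ler_pM; [by apply: mulr_ge0 | by [] | | exact: hal].
      by apply: ler_wpM2r.
    rewrite -mulr_sumr.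
    have : 6 * e * \sum_(l < M) `|tau j l * tau j' l| <= 6 * e * M%:R.
      by apply: ler_wpM2l => //; lra.
    lra.
  have hAA : N%:R * `|A * A' - 1| <= 3 * (M%:R * d + 2 * M%:R * e).
    apply: le_trans (_ : N%:R * `|bk R M N (row j w) M * bk R M N (row j' w) M - 1| <= _).
      apply: ler_wpM2l; first exact: ltW.
      apply: le_trans (@sqrt_close R _ (mulr_ge0 (@acoef_ge0 R M N _ _) (@acoef_ge0 R M N _ _))) _.
      by rewrite exprMn !acoef_sqr.
    apply: le_trans (ler_wpM2l (ltW hN0) (@prod_close R _ _)) _.
    have [_ h1] := rowf j.
    have [h2a h2] := rowf j'.
    have h2b := h2a M (leqnn M).
    have h3 := ler_pM (mulr_ge0 (ltW hN0) (normr_ge0 _)) (normr_ge0 _) h1 (le_trans h2b he1).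
    lra.
  have h8 : 4 * M%:R * d + 12 * M%:R * e <= M%:R * eps / 2.
    have : M%:R * (4 * d + 12 * e) <= M%:R * (eps / 2) by apply: ler_wpM2l => //; lra.
    lra.
  exact: (@final_arith R _ _ _ _ _ _ _ _ _ _ _ hN0 hM0 hP1 hP2 hT1 hT2 hSS hW hAA h8).
Qed.
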